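(* Let $W_1,\dots,W_m\in\mathbb{R}^{n\times n}$ be signed adjacency matrices with $W_k\mathbf{1}=\mathbf{1}$ for all $k$. If for every $k\in\{1,\dots,m\}$ the matrix $W_k$ is eventually stochastic and normal, then $\mathbb{W}=\{W_1,\dots,W_m\}$ is a consensus set for the switched system $\mathbf{x}(t+1)=W_{\sigma(t)}\mathbf{x}(t)$.
   Context: $W_k$ are real matrices (entries of any sign). $W$ is eventually positive if there is $t_0\in\mathbb{Z}_{\ge0}$ with $W^t$ entrywise positive for all integers $t\ge t_0$; eventually stochastic means eventually positive and $W\mathbf{1}=\mathbf{1}$. $W$ is normal if $WW^\top=W^\top W$. A switching signal is any map $\sigma:\mathbb{Z}_{\ge0}\to\{1,\dots,m\}$. $\mathbb{W}$ is a consensus set if for every switching signal and every $\mathbf{x}(0)$ there is $\alpha\in\mathbb{R}$ with $\lim_{t\to\infty}\mathbf{x}(t)=\alpha\mathbf{1}$. *)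

(* Defs.v *)
From HB Require Import structures.
From mathcomp Require Import all_boot all_order all_algebra.
From mathcomp Require Import all_classical all_reals all_analysis.
Set Implicit Arguments. Unset Strict Implicit. Unset Printing Implicit Defensive.
Import Order.TTheory GRing.Theory Num.Theory.
Import numFieldNormedType.Exports.
Local Open Scope classical_set_scope.
Local Open Scope ring_scope.

Definition ones (R : pzRingType) (n : nat) : 'cV[R]_n := const_mx 1.

Definition eventually_positive (R : realType) (n : nat) (W : 'M[R]_n) : Prop :=
  exists t0 : nat, forall t : nat, (t0 <= t)%N -> forall i j, 0 < (W ^+ t) i j.

Definition eventually_stochastic (R : realType) (n : nat) (W : 'M[R]_n) : Prop :=
  eventually_positive W /\ W *m ones R n = ones R n.

Definition normal_mx (R : pzRingType) (n : nat) (W : 'M[R]_n) : Prop :=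
  W *m W^T = W^T *m W.

Fixpoint traj (R : pzRingType) (n m : nat) (Ws : 'I_m -> 'M[R]_n)
  (sigma : nat -> 'I_m) (x0 : 'cV[R]_n) (t : nat) : 'cV[R]_n :=
  match t with
  | O => x0
  | S t' => Ws (sigma t') *m traj Ws sigma x0 t'
  end.

Definition consensus_set (R : realType) (n m : nat) (Ws : 'I_m -> 'M[R]_n) : Prop :=
  forall (sigma : nat -> 'I_m) (x0 : 'cV[R]_n),
    exists alpha : R, forall i : 'I_n,
      (fun t : nat => traj Ws sigma x0 t i ord0 : R) @ \oo --> alpha.

(* Main.v *)
Require Import Defs.
From HB Require Import structures.
From mathcomp Require Import all_boot all_order all_algebra.
From mathcomp Require Import all_classical all_reals all_analysis.
Import Order.TTheory GRing.Theory Num.Theory.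
Import numFieldNormedType.Exports.
Set Implicit Arguments. Unset Strict Implicit. Unset Printing Implicit Defensive.
From mathcomp Require Import ring lra.
Local Open Scope ring_scope.



Definition dot (R : pzRingType) n (u v : 'cV[R]_n) : R := (u^T *m v) 0 0.
Definition norm2 (R : pzRingType) n (u : 'cV[R]_n) : R := dot u u.

Lemma dotE (R : pzRingType) n (u v : 'cV[R]_n) : dot u v = \sum_i u i 0 * v i 0.
Proof. by rewrite /dot !mxE; apply: eq_bigr => i _; rewrite mxE. Qed.

Lemma dot_trmx (R : comPzRingType) n (A : 'M[R]_n) (u v : 'cV[R]_n) :
  dot (A^T *m u) v = dot u (A *m v).
Proof. by rewrite /dot trmx_mul trmxK mulmxA. Qed.

Lemma dot_trmx' (R : comPzRingType) n (A : 'M[R]_n) (u v : 'cV[R]_n) :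
  dot (A *m u) v = dot u (A^T *m v).
Proof. by rewrite -dot_trmx trmxK. Qed.

Lemma dotC (R : comPzRingType) n (u v : 'cV[R]_n) : dot u v = dot v u.
Proof. by rewrite !dotE; apply: eq_bigr => i _; rewrite mulrC. Qed.

Lemma dotBl (R : pzRingType) n (u w v : 'cV[R]_n) : dot (u - w) v = dot u v - dot w v.
Proof. by rewrite !dotE -sumrB; apply: eq_bigr => i _; rewrite !mxE mulrBl. Qed.

Lemma dotBr (R : pzRingType) n (u w v : 'cV[R]_n) : dot v (u - w) = dot v u - dot v w.
Proof. by rewrite !dotE -sumrB; apply: eq_bigr => i _; rewrite !mxE mulrBr. Qed.

Lemma dotZl (R : comPzRingType) n a (u v : 'cV[R]_n) : dot (a *: u) v = a * dot u v.
Proof. by rewrite !dotE mulr_sumr; apply: eq_bigr => i _; rewrite !mxE mulrA. Qed.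

Lemma dotZr (R : comPzRingType) n a (u v : 'cV[R]_n) : dot v (a *: u) = a * dot v u.
Proof. by rewrite !dotE mulr_sumr; apply: eq_bigr => i _; rewrite !mxE mulrCA. Qed.

Lemma norm2_ge0 (R : realDomainType) n (u : 'cV[R]_n) : 0 <= norm2 u.
Proof. by rewrite /norm2 dotE; apply: sumr_ge0 => i _; rewrite -expr2 sqr_ge0. Qed.

Lemma entry_le_norm2 (R : realDomainType) n (u : 'cV[R]_n) i : u i 0 ^+ 2 <= norm2 u.
Proof.
rewrite /norm2 dotE (bigD1 i) //= expr2 lerDl.
by apply: sumr_ge0 => j _; rewrite -expr2 sqr_ge0.
Qed.

Lemma norm2_eq0 (R : realDomainType) n (u : 'cV[R]_n) : norm2 u = 0 -> u = 0.
Proof.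
rewrite /norm2 dotE => /eqP; rewrite psumr_eq0 => [|i _]; last by rewrite -expr2 sqr_ge0.
move=> /allP H; apply/matrixP => i j; rewrite (ord1 j) mxE.
have := H i (mem_index_enum i); rewrite -expr2 sqrf_eq0 => /eqP //.
Qed.

Lemma normal_norm2 (R : comPzRingType) n (A : 'M[R]_n) (y : 'cV[R]_n) :
  A *m A^T = A^T *m A -> norm2 (A^T *m y) = norm2 (A *m y).
Proof.
move=> HA; rewrite /norm2 dot_trmx mulmxA HA -mulmxA.
by rewrite -dot_trmx'.
Qed.

Lemma cauchy_schwarz (R : realFieldType) n (u v : 'cV[R]_n) :
  dot u v ^+ 2 <= norm2 u * norm2 v.
Proof.
have [/norm2_eq0 ->|nz] := eqVneq (norm2 v) 0.
  by rewrite {1}/dot mulmx0 mxE expr0n /=; apply: mulr_ge0; apply: norm2_ge0.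
have a_gt0 : 0 < norm2 v by rewrite lt_def nz norm2_ge0.
set a := norm2 v; set b := dot u v.
have := norm2_ge0 (a *: u - b *: v).
rewrite /norm2 dotBl !dotBr !dotZl !dotZr (dotC v u) -/b -/a.
have -> : a * (a * dot u u) - a * (b * b) - (b * (a * b) - b * (b * a)) =
  a * (a * dot u u - b ^+ 2) by rewrite expr2; ring.
rewrite pmulr_rge0 // subr_ge0 => H.
by rewrite mulrC.
Qed.

Lemma wcauchy (R : rcfType) n (b x : 'I_n -> R) :
  (forall j, 0 <= b j) ->
  (\sum_j b j * x j) ^+ 2 <= (\sum_j b j) * (\sum_j b j * x j ^+ 2).
Proof.
move=> b0.
pose u : 'cV[R]_n := \col_j Num.sqrt (b j).
pose v : 'cV[R]_n := \col_j (Num.sqrt (b j) * x j).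
have := cauchy_schwarz u v.
rewrite /norm2 !dotE.
have E1 : \sum_i u i 0 * v i 0 = \sum_j b j * x j.
  by apply: eq_bigr => i _; rewrite !mxE mulrA -expr2 sqr_sqrtr.
have E2 : \sum_i u i 0 * u i 0 = \sum_j b j.
  by apply: eq_bigr => i _; rewrite !mxE -expr2 sqr_sqrtr.
have E3 : \sum_i v i 0 * v i 0 = \sum_j b j * x j ^+ 2.
  by apply: eq_bigr => i _; rewrite !mxE -expr2 exprMn sqr_sqrtr.
by rewrite E1 E2 E3.
Qed.
Lemma pos_lb (R : realDomainType) (T : eqType) (s : seq T) (f : T -> R) :
  (forall x, x \in s -> 0 < f x) -> exists2 d, 0 < d & forall x, x \in s -> d <= f x.
Proof.
elim: s => [|a s IH] H; first by exists 1 => //.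
have [d d0 Hd] : exists2 d, 0 < d & forall x, x \in s -> d <= f x.
  by apply: IH => x xs; apply: H; rewrite inE xs orbT.
exists (Num.min (f a) d); first by rewrite lt_min d0 H // inE eqxx.
move=> x; rewrite inE => /orP [/eqP ->|xs]; first by rewrite ge_min lexx.
by rewrite ge_min Hd // orbT.
Qed.

Lemma ub_lt1 (R : realDomainType) (T : eqType) (s : seq T) (f : T -> R) :
  (forall x, x \in s -> f x < 1) ->
  exists r, [/\ 0 <= r, r < 1 & forall x, x \in s -> f x <= r].
Proof.
elim: s => [|a s IH] H; first by exists 0.
have [r [r0 r1 Hr]] : exists r, [/\ 0 <= r, r < 1 & forall x, x \in s -> f x <= r].
  by apply: IH => x xs; apply: H; rewrite inE xs orbT.
exists (Num.max (f a) r); split.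
- by rewrite le_max r0 orbT.
- by rewrite gt_max r1 H // inE eqxx.
move=> x; rewrite inE => /orP [/eqP ->|xs]; first by rewrite le_max lexx.
by rewrite le_max Hr // orbT.
Qed.

Lemma ds_contract (R : rcfType) n (P : 'M[R]_n) :
  (forall i j, 0 < P i j) -> P *m ones R n = ones R n ->
  P^T *m ones R n = ones R n ->
  exists c, [/\ 0 <= c, c < 1 &
    forall x : 'cV[R]_n, dot (ones R n) x = 0 -> norm2 (P *m x) <= c * norm2 x].
Proof.
case: n P => [|n] P Ppos Hrow Hcol.
  exists 0; split => // x _.
  by rewrite /norm2 dotE big_ord0 mul0r.
have [d d0 Hd] := @pos_lb _ _ (enum {: 'I_n.+1 * 'I_n.+1}) (fun p => P p.1 p.2)
  (fun p _ => Ppos p.1 p.2).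
have Hd' i j : d <= P i j by have := Hd (i, j); rewrite mem_enum; apply.
have row i : \sum_j P i j = 1.
  have := congr1 (fun M : 'cV[R]_n.+1 => M i 0) Hrow; rewrite !mxE => <-.
  by apply: eq_bigr => j _; rewrite mxE mulr1.
have col j : \sum_i P i j = 1.
  have := congr1 (fun M : 'cV[R]_n.+1 => M j 0) Hcol; rewrite !mxE => <-.
  by apply: eq_bigr => i _; rewrite !mxE mulr1.
pose r := 1 - d *+ n.+1.
have b0 i j : 0 <= P i j - d by rewrite subr_ge0.
have rowb i : \sum_j (P i j - d) = r.
  by rewrite sumrB row sumr_const card_ord.
have colb j : \sum_i (P i j - d) = r.
  by rewrite sumrB col sumr_const card_ord.
have r0 : 0 <= r by rewrite -(rowb ord0); apply: sumr_ge0 => j _.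
have r1 : r < 1 by rewrite /r ltrBlDr ltrDl mulrn_wgt0.
exists (r ^+ 2); split; [by rewrite sqr_ge0| by nra |].
move=> x; rewrite dotE => hx.
have hx' : \sum_j x j 0 = 0.
  by rewrite -[RHS]hx; apply: eq_bigr => j _; rewrite mxE mul1r.
have Px i : (P *m x) i 0 = \sum_j (P i j - d) * x j 0.
  rewrite mxE; under [RHS]eq_bigr do rewrite mulrBl.
  by rewrite sumrB -mulr_sumr hx' mulr0 subr0.
rewrite /norm2 dotE.
have step : \sum_i (P *m x) i 0 * (P *m x) i 0 <= \sum_i r * \sum_j (P i j - d) * x j 0 ^+ 2.
  apply: ler_sum => i _; rewrite -expr2 Px -(rowb i).
  exact: wcauchy.
apply: le_trans step _.
rewrite -mulr_sumr exchange_big /=.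
have -> : \sum_j \sum_i (P i j - d) * x j 0 ^+ 2 = \sum_j r * x j 0 ^+ 2.
  by apply: eq_bigr => j _; rewrite -mulr_suml colb.
rewrite -mulr_sumr mulrA -expr2 /norm2 dotE; apply: ler_wpM2l; first exact: sqr_ge0.
by rewrite le_eqVlt; apply/orP; left; apply/eqP/eq_bigr => j _; rewrite expr2.
Qed.
Lemma zz (V : zmodType) (x y z o : V) : x - y - (z - o) = x - z - (y - o).
Proof. by rewrite !opprB !addrA -!(addrAC _ o) -!addrA (addrC (-y)). Qed.

Lemma mxM (R : pzRingType) n (A B : 'M[R]_n) : A * B = A *m B.
Proof. by rewrite mulmxE. Qed.

Lemma pow_ones (R : pzRingType) n (W : 'M[R]_n) k :
  W *m ones R n = ones R n -> W ^+ k *m ones R n = ones R n.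
Proof.
move=> H; elim: k => [|k IH]; first by rewrite expr0 mul1mx.
by rewrite exprS mxM -mulmxA IH H.
Qed.

Lemma trmxX (R : comPzRingType) n (W : 'M[R]_n) k : (W ^+ k)^T = W^T ^+ k.
Proof.
elim: k => [|k IH]; first by rewrite !expr0 trmx1.
by rewrite exprS exprSr !mxM trmx_mul IH.
Qed.

Lemma normalX (R : comPzRingType) n (W : 'M[R]_n) k :
  W *m W^T = W^T *m W -> W ^+ k *m (W ^+ k)^T = (W ^+ k)^T *m W ^+ k.
Proof.
move=> H; have c : GRing.comm W W^T by rewrite /GRing.comm !mxM.
have c1 := commrX k c.
have c2 := commrX k (commr_sym c1).
by rewrite trmxX -!mxM; apply: commr_sym.
Qed.

Lemma bernoulli_le (R : realFieldType) (h : R) N :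
  0 <= h -> h <= 1 -> 1 - N%:R * h <= (1 - h) ^+ N.
Proof.
move=> h0 h1; elim: N => [|N IH]; first by rewrite mul0r subr0 expr0.
rewrite exprSr.
have h1' : 0 <= 1 - h by rewrite subr_ge0.
apply: le_trans (ler_wpM2r h1' IH).
have Nge0 : 0 <= N%:R :> R by apply: ler0n.
rewrite -natr1; nra.
Qed.

Lemma normal_trones (R : realDomainType) n (W : 'M[R]_n) :
  W *m ones R n = ones R n -> W *m W^T = W^T *m W -> W^T *m ones R n = ones R n.
Proof.
move=> H1 Hn.
  pose A := W - 1%:M.
  have HA : A *m A^T = A^T *m A.
    rewrite /A linearB /= trmx1 !mulmxBl !mulmxBr !mulmx1 !mul1mx Hn.
    by rewrite zz.
  have := normal_norm2 (ones R n) HA.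
  rewrite /A mulmxBl mul1mx H1 subrr.
  have -> : norm2 (0 : 'cV[R]_n) = 0 by rewrite /norm2 /dot mulmx0 mxE.
  move/norm2_eq0; rewrite linearB /= trmx1 mulmxBl mul1mx => /eqP.
  by rewrite subr_eq0 => /eqP.
Qed.

Lemma mat_contract (R : rcfType) n (W : 'M[R]_n) :
  W *m ones R n = ones R n -> W *m W^T = W^T *m W ->
  (exists t0 : nat, forall t : nat, (t0 <= t)%N -> forall i j, 0 < (W ^+ t) i j) ->
  exists rho, [/\ 0 <= rho, rho < 1 &
    forall x : 'cV[R]_n, dot (ones R n) x = 0 -> norm2 (W *m x) <= rho * norm2 x].
Proof.
move=> H1 Hn [t0 Ht0].
have HT1 := normal_trones H1 Hn.
pose N := (2 ^ t0)%N.
have NP : (0 < N)%N by rewrite expn_gt0.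
have tN : (t0 <= N)%N by apply: ltnW; apply: ltn_expl.
have HPT : (W ^+ N)^T *m ones R n = ones R n by rewrite trmxX; apply: pow_ones.
have [c [c0 c1 Hc]] := ds_contract (Ht0 N tN) (pow_ones N H1) HPT.
pose h := (1 - c) / N%:R.
have Npos : 0 < N%:R :> R by rewrite ltr0n.
have h0 : 0 < h by rewrite divr_gt0 // subr_gt0.
have h1 : h <= 1.
  rewrite ler_pdivrMr // mul1r; apply: le_trans (_ : 1 <= _).
    by rewrite lerBlDr lerDl.
  by rewrite ler1n.
exists (1 - h); split.
- by rewrite subr_ge0.
- by rewrite ltrBlDr ltrDl.
move=> x hx.
set s := norm2 x.
have [s0|spos] := eqVneq s 0.
  have -> : x = 0 by apply: norm2_eq0.
  rewrite mulmx0 {1}/norm2 {1}/dot mulmx0 mxE.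
  by apply: mulr_ge0; [rewrite subr_ge0|apply: norm2_ge0].
have spos' : 0 < s by rewrite lt_def spos norm2_ge0.
pose a k := norm2 (W ^+ (2 ^ k) *m x).
have a_ge0 k : 0 <= a k by apply: norm2_ge0.
have step k : a k ^+ 2 <= s * a k.+1.
  pose B := W ^+ (2 ^ k).
  have HB : B *m B^T = B^T *m B by apply: normalX.
  have -> : a k = dot x (B^T *m (B *m x)) by rewrite /a /norm2 dot_trmx'.
  apply: le_trans (cauchy_schwarz _ _) _.
  rewrite normal_norm2 // mulmxA -mxM -exprD addnn -mul2n -expnS.
  by [].
have claim k : a 0 ^+ (2 ^ k) * s <= s ^+ (2 ^ k) * a k.
  elim: k => [|k IH]; first by rewrite expn0 !expr1 mulrC.
  set u := a 0 ^+ (2 ^ k) in IH; set v := s ^+ (2 ^ k) in IH.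
  have u0 : 0 <= u by rewrite exprn_ge0.
  have v0 : 0 <= v by rewrite exprn_ge0 // ltW.
  rewrite expnS mulnC !exprM -/u -/v.
  have H1' : u * s * (u * s) <= v * a k * (v * a k).
    by apply: ler_pM => //; apply: mulr_ge0 => //; apply: ltW.
  have H2' : v * a k * (v * a k) <= v * v * (s * a k.+1).
    have -> : v * a k * (v * a k) = v * v * a k ^+ 2 by rewrite expr2; ring.
    by apply: ler_wpM2l; [apply: mulr_ge0|apply: step].
  rewrite -(ler_pM2l spos').
  have -> : s * (u ^+ 2 * s) = u * s * (u * s) by rewrite expr2; ring.
  have -> : s * (v ^+ 2 * a k.+1) = v * v * (s * a k.+1) by rewrite expr2; ring.
  exact: le_trans H1' H2'.
have HaN : a 0 ^+ N <= c * s ^+ N.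
  have := claim t0; rewrite -/N => H.
  have Hc' : a t0 <= c * s by apply: Hc.
  rewrite -(ler_pM2r spos'); apply: le_trans H _.
  rewrite (mulrC c) -mulrA; apply: ler_wpM2l; first by rewrite exprn_ge0 // ltW.
  exact: Hc'.
have Hb : c <= (1 - h) ^+ N.
  apply: le_trans (bernoulli_le N (ltW h0) h1).
  rewrite /h mulrC divfK; last by rewrite gt_eqF.
  by rewrite opprB addrC subrK.
rewrite /a expn0 expr1 in HaN.
rewrite leNgt; apply/negP => Hlt.
have rs0 : 0 <= (1 - h) * s by apply: mulr_ge0; [rewrite subr_ge0|apply: ltW].
have := ltrXn2r N rs0 Hlt; rewrite -lt0n NP => Hlt2.
have : c * s ^+ N < c * s ^+ N.
  have L1 : c * s ^+ N <= ((1 - h) * s) ^+ N.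
    by rewrite exprMn; apply: ler_wpM2r => //; rewrite exprn_ge0 // ltW.
  exact: le_lt_trans L1 (lt_le_trans Hlt2 HaN).
by rewrite ltxx.
Qed.

Theorem theorem8 (R : realType) (n m : nat) (Ws : 'I_m -> 'M[R]_n) :
  (forall k, Ws k *m ones R n = ones R n) ->
  (forall k, eventually_stochastic (Ws k) /\ normal_mx (Ws k)) ->
  consensus_set Ws.
Proof.
move=> H1 Hk sigma x0.
case: n Ws H1 Hk x0 => [|n] Ws H1 Hk x0; first by exists 0 => -[].
have Hex : forall k, exists rho : R, [/\ 0 <= rho, rho < 1 &
    forall x : 'cV[R]_n.+1, dot (ones R n.+1) x = 0 ->
      norm2 (Ws k *m x) <= rho * norm2 x].
  move=> k; have [[Hpos _] Hn] := Hk k.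
  exact: mat_contract (H1 k) Hn Hpos.
have [f Hf] := fin_all_exists Hex.
have [rho [rho0 rho1 Hrho]] := @ub_lt1 _ _ (enum 'I_m) f
  (fun k _ => let: And3 _ h _ := Hf k in h).
have Hc k x : dot (ones R n.+1) x = 0 -> norm2 (Ws k *m x) <= rho * norm2 x.
  move=> hx; have [_ _ h] := Hf k; apply: le_trans (h x hx) _.
  by apply: ler_wpM2r; [apply: norm2_ge0| apply: Hrho; rewrite mem_enum].
have HT k : (Ws k)^T *m ones R n.+1 = ones R n.+1.
  by apply: normal_trones (H1 k) (Hk k).2.
pose alpha := dot (ones R n.+1) x0 / n.+1%:R.
pose e t := traj Ws sigma x0 t - alpha *: ones R n.+1.
have eS t : e t.+1 = Ws (sigma t) *m e t.
  by rewrite /e /= mulmxBr -scalemxAr H1.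
have dot11 : dot (ones R n.+1) (ones R n.+1) = n.+1%:R.
  rewrite dotE (eq_bigr (fun _ => 1)); last by move=> i _; rewrite mxE mul1r.
  by rewrite sumr_const card_ord.
have e_orth t : dot (ones R n.+1) (e t) = 0.
  elim: t => [|t IH].
    rewrite /e /= dotBr dotZr dot11 /alpha divfK; first by rewrite subrr.
    by rewrite gt_eqF // ltr0n.
  by rewrite eS -dot_trmx HT.
have e_bound t : norm2 (e t) <= rho ^+ t * norm2 (e 0).
  elim: t => [|t IH]; first by rewrite expr0 mul1r.
  rewrite eS; apply: le_trans (Hc _ _ (e_orth t)) _.
  by rewrite exprS -mulrA; apply: ler_wpM2l.
exists alpha => i.
set C := norm2 (e 0).
have C0 : 0 <= C by apply: norm2_ge0.
pose D := Num.sqrt C; pose q := Num.sqrt rho.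
have q0 : 0 <= q by apply: sqrtr_ge0.
have q1 : `|q| < 1 by rewrite ger0_norm // -sqrtr1 ltr_sqrt.
have Hb t : `|traj Ws sigma x0 t i ord0 - alpha| <= D * q ^+ t.
  have -> : traj Ws sigma x0 t i ord0 - alpha = e t i ord0.
    by rewrite /e !mxE mulr1.
  rewrite -sqrtr_sqr.
  have -> : D * q ^+ t = Num.sqrt (rho ^+ t * C).
    rewrite sqrtrM ?exprn_ge0 // mulrC; congr (_ * _).
    rewrite -{1}(sqr_sqrtr rho0) -/q -exprM mulnC exprM sqrtr_sqr ger0_norm //.
    exact: exprn_ge0.
  apply: ler_wsqrtr; apply: le_trans (entry_le_norm2 _ _) (e_bound t).
have G := cvg_geometric D q1.
apply: (@squeeze_cvgr _ _ _ _ (fun t => alpha - geometric D q t)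
  (fun t => alpha + geometric D q t)).
- apply: nearW => t /=; have := Hb t; rewrite ler_distl.
  by [].
- have := cvgB (cvg_cst alpha) G; rewrite subr0; apply.
- have := cvgD (cvg_cst alpha) G; rewrite addr0; apply.
Qed.
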